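(* Consider the closed-loop scalar system $\dot X(t)=aX(t)+bU(t)$ with $a>0$, $b\neq0$, and the corresponding open-loop system $\dot X(t)=aX(t)$ (i.e. $b=0$), both with random initial state $X(0)$ satisfying $h(X(0))<\infty$ and $|X(0)|<L$ ($L$ known to sensor and controller), with the sensor communicating to the controller/estimator over the timing channel described in the context. If there exists a controller such that in closed loop $|X(t)|\to0$ in probability as $t\to\infty$, then there exists an estimator such that in open loop $|X(t)-\hat X(t)|\to0$ in probability as $t\to\infty$.
   Context: Timing channel: symbols from a one-element alphabet; the channel is initialized with a symbol received at time $0$; after the acknowledgment of the $i$-th reception, the sender waits $W_{i+1}\ge0$ and transmits the next symbol, received after an i.i.d. random delay $S_{i+1}\ge0$; $D_i=W_i+S_i$, $\mathcal{T}_n=\sum_{i\le n}D_i$. The sensor knows $X(0)$, $L$ and the dynamics and encodes into the waiting times (random i.i.d. codebook independent of the delays; acknowledgments used only to avoid queuing). The controller (resp. estimator), at any time $t$, computes $U(t)$ (resp. $\hat X(t)$) from the inter-reception times of all symbols received up to time $t$, together with $L$ and the dynamics. *)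

(* Defs.v *)
From HB Require Import structures.
From mathcomp Require Import all_boot all_order all_algebra.
From mathcomp Require Import all_classical all_reals all_analysis.
Set Implicit Arguments. Unset Strict Implicit. Unset Printing Implicit Defensive.
Import Order.TTheory GRing.Theory Num.Theory.
Import numFieldNormedType.Exports.
Local Open Scope classical_set_scope.
Local Open Scope ring_scope.

Section TimingChannel.
Context (R : realType) (dO : measure_display) (Omega : measurableType dO).

(** X0 has a density f w.r.t. Lebesgue measure and its differential entropy
    h(X0) = - \int f ln f is finite (f ln f Lebesgue-integrable; ln 0 = 0,
    i.e. the convention 0 ln 0 = 0). *)
Definition finite_diff_entropy (P : probability Omega R) (X0 : Omega -> R) :=
  exists f : R -> R,
    [/\ (forall x, 0 <= f x), measurable_fun setT f,
        (forall A, measurable A ->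
           P (X0 @^-1` A) = (\int[lebesgue_measure]_(x in A) (f x)%:E)%E)
      & lebesgue_measure.-integrable setT (fun x => (f x * ln (f x))%:E)].

(** The delays (S i)_i are i.i.d. and the sequence is independent of the
    pair (X0, C) (initial state, random codebook). *)
Definition iid_delays_indep (dT : measure_display) (Theta : measurableType dT)
    (P : probability Omega R) (X0 : Omega -> R) (C : Omega -> Theta)
    (S : nat -> Omega -> R) :=
  (forall i j (E : set R), measurable E ->
     P (S i @^-1` E) = P (S j @^-1` E)) /\
  (forall (F : seq nat) (E : nat -> set R) (A : set R) (B : set Theta),
     uniq F -> (forall i, measurable (E i)) -> measurable A -> measurable B ->
     P (X0 @^-1` A `&` C @^-1` B `&` \bigcap_(i in [set` F]) (S i @^-1` E i))
     = (P (X0 @^-1` A `&` C @^-1` B) * \prod_(i <- F) P (S i @^-1` E i))%E).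

(** Total delays D_{i+1} = W_{i+1} + S_{i+1} (index shifted by one),
    waiting times produced by the encoder from X0 and the codebook. *)
Definition Dtot (dT : measure_display) (Theta : measurableType dT)
    (enc : nat -> R -> Theta -> R) (X0 : Omega -> R) (C : Omega -> Theta)
    (S : nat -> Omega -> R) (i : nat) (w : Omega) : R :=
  enc i (X0 w) (C w) + S i w.

(** Reception time of the n-th symbol after the initial one (T_0 = 0). *)
Definition Trec (D : nat -> Omega -> R) (n : nat) (w : Omega) : R :=
  \sum_(i < n) D i w.

(** Information available at time t: the inter-reception times of all
    symbols received up to time t (None = not yet received). *)
Definition observed (D : nat -> Omega -> R) (t : R) (w : Omega) : nat -> option R :=
  fun i => if Trec D i.+1 w <= t then Some (D i w) else None.

(** Closed-loop state of dX = aX + bU, X(0) = X0, by variation of constants. *)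
Definition closed_state (a b : R) (X0 : Omega -> R) (U : R -> Omega -> R)
    (t : R) (w : Omega) : R :=
  expR (a * t) * X0 w +
  fine (\int[lebesgue_measure]_(s in `[0%R, t]%classic) (expR (a * (t - s)) * b * U s w)%:E)%E.

Definition conv0_in_prob (P : probability Omega R) (Y : R -> Omega -> R) :=
  forall eps : R, 0 < eps ->
    P [set w | eps <= `|Y t w|] @[t --> +oo] --> 0%E.

End TimingChannel.

(* Main.v *)
Require Import Defs.
From HB Require Import structures.
From mathcomp Require Import all_boot all_order all_algebra.
From mathcomp Require Import all_classical all_reals all_analysis.
From mathcomp Require Import measurable_realfun.
Import Order.TTheory GRing.Theory Num.Theory.
Import numFieldNormedType.Exports.
Local Open Scope classical_set_scope.
Local Open Scope ring_scope.

Definition recover {R : realType} (s : R) (o : nat -> option R) : nat -> option R :=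
  fun i => if o i is Some d then
     (if \sum_(j < i.+1) odflt 0 (o j) <= s then Some d else None) else None.

Lemma sum_ord_mono (R : realType) (F : nat -> R) m n :
  (forall i, 0 <= F i) -> (m <= n)%N -> \sum_(i < m) F i <= \sum_(i < n) F i.
Proof.
move=> F0 mn.
rewrite (big_ord_widen n F mn).
rewrite [X in _ <= X](bigID (fun i : 'I_n => (i < m)%N)) /= lerDl.
by apply: sumr_ge0 => i _.
Qed.

Lemma recover_obs (R : realType) (dO : measure_display) (Omega : measurableType dO)
  (D : nat -> Omega -> R) (s t : R) (w : Omega) :
  (forall i, 0 <= D i w) -> s <= t ->
  recover s (observed D t w) = observed D s w.
Proof.
move=> D0 st; apply: funext => i.
rewrite /recover /observed.
case: ifP => hi.
  have -> : \sum_(j < i.+1) odflt 0 (if Trec D j.+1 w <= t then Some (D j w) else None)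
            = Trec D i.+1 w.
    rewrite /Trec; apply: eq_bigr => j _.
    have : Trec D j.+1 w <= t.
      apply: le_trans hi; rewrite /Trec; apply: (@sum_ord_mono R (fun k => D k w)) => //; exact: ltn_ord.
    by rewrite /Trec => ->.
  by [].
case: ifP => // hs.
by move: hi; rewrite (le_trans hs st).
Qed.

Theorem lemma1 (R : realType) (dO : measure_display) (Omega : measurableType dO)
  (P : probability Omega R) (dT : measure_display) (Theta : measurableType dT)
  (a b L : R) (X0 : Omega -> R) (C : Omega -> Theta) (S : nat -> Omega -> R)
  (enc : nat -> R -> Theta -> R) :
  0 < a -> b != 0 ->
  measurable_fun setT X0 -> measurable_fun setT C ->
  (forall i, measurable_fun setT (S i)) ->
  finite_diff_entropy P X0 ->
  (forall w, `|X0 w| < L) ->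
  (forall i w, 0 <= S i w) ->
  iid_delays_indep P X0 C S ->
  (forall i x c, 0 <= enc i x c) ->
  (exists u : R -> (nat -> option R) -> R,
     let U := fun t w => u t (observed (Dtot enc X0 C S) t w) in
     (forall w t, 0 <= t ->
        lebesgue_measure.-integrable `[0, t]%classic (fun s => (U s w)%:E)) /\
     (forall t, measurable_fun setT (closed_state a b X0 U t)) /\
     conv0_in_prob P (closed_state a b X0 U)) ->
  exists xhat : R -> (nat -> option R) -> R,
     let Xhat := fun t w => xhat t (observed (Dtot enc X0 C S) t w) in
     (forall t, measurable_fun setT (Xhat t)) /\
     conv0_in_prob P (fun t w => expR (a * t) * X0 w - Xhat t w).
Proof.
move=> ha hb mX0 mC mS _ _ hS _ henc [u]; cbv zeta => -[_ [hmeas hconv]].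
set D := Dtot enc X0 C S.
have D0 : forall i w, 0 <= D i w by move=> i w; rewrite /D /Dtot addr_ge0.
pose xhat := fun (t : R) (o : nat -> option R) =>
  - fine (\int[lebesgue_measure]_(s in `[0%R, t]%classic)
        (expR (a * (t - s)) * b * u s (recover s o))%:E)%E.
have key : forall t w, xhat t (observed D t w) =
    expR (a * t) * X0 w - closed_state a b X0 (fun t w => u t (observed D t w)) t w.
  move=> t w; rewrite /xhat /closed_state opprD addrA subrr add0r.
  congr (- fine _); apply: eq_integral => s; rewrite inE /= in_itv /= => /andP [_ hst].
  by rewrite recover_obs.
exists xhat; cbv zeta; split.
  move=> t.
  have -> : (fun w => xhat t (observed D t w)) = (fun w =>
    expR (a * t) * X0 w - closed_state a b X0 (fun t w => u t (observed D t w)) t w).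
    by apply: funext => w; rewrite key.
  apply: measurable_funB; last exact: hmeas.
  apply: measurable_funM => //; exact: measurable_cst.
have -> : (fun t w => expR (a * t) * X0 w - xhat t (observed D t w)) =
   closed_state a b X0 (fun t w => u t (observed D t w)).
  apply: funext => t; apply: funext => w; rewrite key opprB addrC subrK.
  by [].
exact: hconv.
Qed.
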